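(* $\mathcal{H}^3=\left\{a+b\mathbf{j}\in\mathbb{D} : |a|+|b|\leq \frac{2}{3\sqrt{3}}\right\}$. In particular $\mathcal{H}^3$ is a square centered at the origin with side length $\frac{2\sqrt{2}}{3\sqrt{3}}$.
   Context: The hyperbolic numbers are $\mathbb{D}=\{a+b\mathbf{j} : a,b\in\mathbb{R}\}$ with $\mathbf{j}^2=1$, $\mathbf{j}\notin\mathbb{R}$, a commutative real algebra identified with $\mathbb{R}^2$ via $a+b\mathbf{j}\leftrightarrow(a,b)$, with the Euclidean norm. For $c\in\mathbb{D}$, $Q_{3,c}(z)=z^3+c$ on $\mathbb{D}$, $Q_{3,c}^m$ its $m$-fold iterate, and $\mathcal{H}^3=\{c\in\mathbb{D} : (Q_{3,c}^m(0))_{m\geq1}\text{ is bounded}\}$. *)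

(* Defs.v *)
From Stdlib Require Import Reals.
Open Scope R_scope.

(* a + b j  is represented as the pair (a, b) *)
Definition hyp : Type := (R * R)%type.

Definition hyp_add (z w : hyp) : hyp := (fst z + fst w, snd z + snd w).
(* (a + b j)(c + d j) = (ac + bd) + (ad + bc) j, since j^2 = 1 *)
Definition hyp_mul (z w : hyp) : hyp :=
  (fst z * fst w + snd z * snd w, fst z * snd w + snd z * fst w).

Definition hyp_norm (z : hyp) : R := sqrt (fst z * fst z + snd z * snd z).

Definition hyp_zero : hyp := (0, 0).

Definition Q3 (c z : hyp) : hyp := hyp_add (hyp_mul z (hyp_mul z z)) c.

Fixpoint Q3_iter (c : hyp) (m : nat) (z : hyp) : hyp :=
  match m with
  | O => z
  | S k => Q3 c (Q3_iter c k z)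
  end.

Definition in_H3 (c : hyp) : Prop :=
  exists M : R, forall m : nat, (1 <= m)%nat -> hyp_norm (Q3_iter c m hyp_zero) <= M.

Definition hyp_dist (z w : hyp) : R :=
  hyp_norm (fst z - fst w, snd z - snd w).

(* Main.v *)
Require Import Defs.
From Stdlib Require Import Reals Lra Psatz.
Open Scope R_scope.

Fixpoint fr (c : R) (n : nat) : R :=
  match n with O => 0 | S k => fr c k * fr c k * fr c k + c end.

Lemma iter_eq a b n :
  Q3_iter (a, b) n hyp_zero =
  ((fr (a+b) n + fr (a-b) n)/2, (fr (a+b) n - fr (a-b) n)/2).
Proof.
  induction n as [|n IH]; simpl.
  - unfold hyp_zero; f_equal; field.
  - rewrite IH. unfold Q3, hyp_add, hyp_mul; simpl. f_equal; field.
Qed.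

Lemma fr_opp c n : fr (-c) n = - fr c n.
Proof. induction n; simpl; [ring| rewrite IHn; ring]. Qed.

Lemma s_facts : 0 < / sqrt 3 /\ / sqrt 3 * / sqrt 3 = 1/3 /\
  2 / (3 * sqrt 3) = 2 * / sqrt 3 / 3.
Proof.
  assert (H: 0 < sqrt 3) by (apply sqrt_lt_R0; lra).
  assert (H2: sqrt 3 * sqrt 3 = 3) by (apply sqrt_sqrt; lra).
  repeat split.
  - apply Rinv_0_lt_compat; lra.
  - rewrite <- Rinv_mult, H2; lra.
  - field; lra.
Qed.

Lemma bounded c s : 0 < s -> s * s = 1/3 -> Rabs c <= 2*s/3 ->
  forall n, Rabs (fr c n) <= s.
Proof.
  intros Hs Hss Hc n; induction n; simpl.
  - rewrite Rabs_R0; lra.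
  - set (x := fr c n) in *.
    assert (Rabs (x*x*x) <= s*s*s).
    { rewrite !Rabs_mult. assert (0 <= Rabs x) by apply Rabs_pos.
      assert (Rabs x * Rabs x <= s * s) by nra. nra. }
    eapply Rle_trans; [apply Rabs_triang|]. nra.
Qed.

Lemma unbounded c s : 0 < s -> s * s = 1/3 -> c > 2*s/3 ->
  forall n, fr c n >= INR n * (c - 2*s/3) /\ fr c n >= 0.
Proof.
  intros Hs Hss Hc n; induction n.
  - simpl; lra.
  - rewrite S_INR. simpl fr. set (x := fr c n) in *. destruct IHn as [H1 H2].
    assert (E: x*x*x - x + 2*s/3 = (x-s)*(x-s)*(x+2*s)).
    { assert (E0: (x-s)*(x-s)*(x+2*s) = x*x*x - 3*(s*s)*x + 2*(s*s)*s) by ring.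
      rewrite Hss in E0. lra. }
    assert (0 <= (x-s)*(x-s)*(x+2*s)).
    { apply Rmult_le_pos; [apply Rle_0_sqr|lra]. }
    split; nra.
Qed.

Lemma norm_fst z : Rabs (fst z) <= hyp_norm z.
Proof.
  unfold hyp_norm. rewrite <- sqrt_Rsqr_abs. apply sqrt_le_1_alt.
  unfold Rsqr; nra.
Qed.
Lemma norm_snd z : Rabs (snd z) <= hyp_norm z.
Proof.
  unfold hyp_norm. rewrite <- sqrt_Rsqr_abs. apply sqrt_le_1_alt.
  unfold Rsqr; nra.
Qed.

Lemma real_bounded c s : 0 < s -> s * s = 1/3 ->
  (exists M, forall n, Rabs (fr c n) <= M) -> Rabs c <= 2*s/3.
Proof.
  intros Hs Hss [M HM].
  destruct (Rle_dec (Rabs c) (2*s/3)) as [h|h]; [exact h|exfalso].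
  assert (gen: forall c', c' > 2*s/3 -> (forall n, Rabs (fr c' n) <= M) -> False).
  { intros c' Hc' HM'.
    destruct (INR_archimed (c' - 2*s/3) M) as [n Hn]; [lra|].
    destruct (unbounded c' s Hs Hss Hc' n) as [A B].
    specialize (HM' n). rewrite Rabs_right in HM' by lra. lra. }
  destruct (Rle_dec 0 c) as [h0|h0].
  - rewrite Rabs_right in h by lra. apply (gen c); [lra|exact HM].
  - rewrite Rabs_left in h by lra. apply (gen (-c)); [lra|].
    intro k; rewrite fr_opp, Rabs_Ropp; apply HM.
Qed.

Lemma abs_sum a b r : Rabs a + Rabs b <= r <-> Rabs (a+b) <= r /\ Rabs (a-b) <= r.
Proof.
  unfold Rabs; destruct (Rcase_abs a), (Rcase_abs b), (Rcase_abs (a+b)),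
    (Rcase_abs (a-b)); split; intros; try split; lra.
Qed.

Theorem mainTheorem10 :
  (forall a b : R,
      in_H3 (a, b) <-> Rabs a + Rabs b <= 2 / (3 * sqrt 3)) /\
  (* the square has vertices (±r,0),(0,±r), r = 2/(3√3); side length: *)
  hyp_dist (2 / (3 * sqrt 3), 0) (0, 2 / (3 * sqrt 3))
    = 2 * sqrt 2 / (3 * sqrt 3).
Proof.
  destruct s_facts as [Hs [Hss Hr]].
  set (s := / sqrt 3) in *.
  split.
  - intros a b. rewrite Hr, abs_sum. unfold in_H3. split.
    + intros [M HM].
      assert (B: forall n, Rabs (fr (a+b) n) <= 2 * Rabs M /\ Rabs (fr (a-b) n) <= 2 * Rabs M).
      { intro n. destruct n as [|n].
        - simpl; rewrite Rabs_R0; split; apply Rmult_le_pos; try lra; apply Rabs_pos.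
        - assert (H := HM (S n) ltac:(lia)). rewrite iter_eq in H.
          assert (H1 := norm_fst ((fr (a + b) (S n) + fr (a - b) (S n)) / 2,
                                  (fr (a + b) (S n) - fr (a - b) (S n)) / 2)).
          assert (H2 := norm_snd ((fr (a + b) (S n) + fr (a - b) (S n)) / 2,
                                  (fr (a + b) (S n) - fr (a - b) (S n)) / 2)).
          cbn [fst snd] in H1, H2. assert (M <= Rabs M) by apply Rle_abs. set (mm := Rabs M) in *.
          set (u := fr (a+b) (S n)) in *. set (v := fr (a-b) (S n)) in *.
          revert H1 H2. unfold Rabs; destruct (Rcase_abs u), (Rcase_abs v),
            (Rcase_abs ((u+v)/2)), (Rcase_abs ((u-v)/2)); intros; try split; lra. }
      split; apply (real_bounded _ s Hs Hss); exists (2 * Rabs M); intro n; apply B.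
    + intros [H1 H2]. exists 2. intros m _. rewrite iter_eq.
      assert (A := bounded _ s Hs Hss H1 m). assert (B := bounded _ s Hs Hss H2 m).
      set (u := fr (a+b) m) in *. set (v := fr (a-b) m) in *.
      unfold hyp_norm; simpl.
      assert (Hsl : s <= 1) by nra.
      apply Rle_trans with (sqrt 4).
      * apply sqrt_le_1_alt.
        assert (Rabs u * Rabs u <= 1) by (assert (0 <= Rabs u) by apply Rabs_pos; nra).
        assert (Rabs v * Rabs v <= 1) by (assert (0 <= Rabs v) by apply Rabs_pos; nra).
        rewrite <- !Rabs_mult in *. rewrite !Rabs_right in * by nra. nra.
      * replace 4 with (2*2) by ring. rewrite sqrt_square; lra.
  - unfold hyp_dist, hyp_norm; simpl.
    set (r := 2 / (3 * sqrt 3)).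
    assert (0 <= r) by (unfold r; rewrite Hr; lra).
    replace ((r - 0) * (r - 0) + (0 - r) * (0 - r)) with (2 * (r * r)) by ring.
    rewrite sqrt_mult_alt by lra. rewrite sqrt_square by lra.
    unfold r. field. apply Rgt_not_eq, sqrt_lt_R0; lra.
Qed.
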